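(* The super-Apollonian group $\mathcal A^S=\langle\mathbf S_1,\mathbf S_2,\mathbf S_3,\mathbf S_4,\mathbf S_1^\perp,\mathbf S_2^\perp,\mathbf S_3^\perp,\mathbf S_4^\perp\rangle\subset GL(4,\mathbb Z)$ is a Coxeter group with the complete set of defining relations $$\mathbf S_i^2=(\mathbf S_i^\perp)^2=\mathbf I\ (1\le i\le4),\qquad (\mathbf S_i\mathbf S_j^\perp)^2=\mathbf I\ (i\neq j).$$ That is, the abstract group with generators $s_1,\dots,s_4,t_1,\dots,t_4$ and relations $s_i^2=t_i^2=1$ and $(s_it_j)^2=1$ for $i\ne j$ is isomorphic to $\mathcal A^S$ via $s_i\mapsto\mathbf S_i$, $t_i\mapsto\mathbf S_i^\perp$.
   Context: $\mathbf S_i$ is the $4\times4$ integer matrix agreeing with the identity except in row $i$, which has $-1$ in position $i$ and $2$ in the other three positions (e.g. first row of $\mathbf S_1$ is $(-1,2,2,2)$); $\mathbf S_i^\perp=\mathbf S_i^T$. *)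

(* Defs.v *)
From HB Require Import structures.
From mathcomp Require Import all_boot all_order all_algebra.
Set Implicit Arguments. Unset Strict Implicit. Unset Printing Implicit Defensive.
Import Order.TTheory GRing.Theory Num.Theory.
Local Open Scope ring_scope.

Definition Smx (i : 'I_4) : 'M[int]_4 :=
  \matrix_(r < 4, c < 4)
    (if r == i then (if c == i then -1 else 2) else (r == c)%:R).

(* Generators of the super-Apollonian group: inl i |-> S_i, inr i |-> S_i^perp = S_i^T *)
Definition gen_mx (x : 'I_4 + 'I_4) : 'M[int]_4 :=
  match x with inl i => Smx i | inr i => (Smx i)^T end.

(* Words in the free group on the 8 abstract generators s_i (inl i), t_i (inr i);
   a letter (x, true) stands for the inverse x^{-1}. *)
Definition letter := (('I_4 + 'I_4) * bool)%type.
Definition word := seq letter.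

Definition letter_mx (l : letter) : 'M[int]_4 :=
  if l.2 then invmx (gen_mx l.1) else gen_mx l.1.

Definition eval_word (w : word) : 'M[int]_4 := \prod_(l <- w) letter_mx l.

Definition relator (r : word) : Prop :=
  exists i : 'I_4,
    r = [:: (inl i, false); (inl i, false)] \/
    r = [:: (inr i, false); (inr i, false)] \/
    exists j : 'I_4, i != j /\
      r = [:: (inl i, false); (inr j, false); (inl i, false); (inr j, false)].

Inductive pres_eq : word -> word -> Prop :=
| pe_refl w : pres_eq w w
| pe_sym u v : pres_eq u v -> pres_eq v u
| pe_trans u v w : pres_eq u v -> pres_eq v w -> pres_eq u w
| pe_free u v x b : pres_eq (u ++ v) (u ++ (x, b) :: (x, ~~ b) :: v)
| pe_rel u v r : relator r -> pres_eq (u ++ v) (u ++ r ++ v).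

(* Main.v *)
Require Import Defs.
From HB Require Import structures.
From mathcomp Require Import all_boot all_order all_algebra.
From mathcomp Require Import zify.
From Stdlib Require Import ClassicalEpsilon.
Set Implicit Arguments. Unset Strict Implicit. Unset Printing Implicit Defensive.
Import Order.TTheory GRing.Theory Num.Theory.
Local Open Scope ring_scope.

Notation gen := ('I_4 + 'I_4)%type.

Lemma ord4P (i : 'I_4) : i = ord0 \/ i = lift ord0 ord0 \/ i = lift ord0 (lift ord0 ord0)
  \/ i = lift ord0 (lift ord0 (lift ord0 ord0)).
Proof. by case: i => [[|[|[|[|//]]]] Hi]; [left|right;left|right;right;left|right;right;right]; apply: val_inj. Qed.

Ltac ord4 i := case: (ord4P i) => [->|[->|[->|->]]].

Definition cfv (s : gen) (v : 'cV[int]_4) : int :=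
  match s with
  | inl i => 4 * v i 0 - 2 * (\sum_(j < 4) v j 0)
  | inr i => - v i 0
  end.

Definition Acoef (s x : gen) : int :=
  match s, x with
  | inl i, inl j => if i == j then 2 else -2
  | inr i, inr j => if i == j then 2 else -2
  | inl i, inr j => if i == j then -16 else 0
  | inr i, inl j => if i == j then -1 else 0
  end.

Definition rt (x : gen) : 'cV[int]_4 :=
  match x with
  | inl i => \col_k (k == i)%:R
  | inr i => \col_k (2 - 4 * (k == i)%:R)
  end.

Lemma cf_act s x v : cfv s (gen_mx x *m v) = cfv s v - Acoef s x * cfv x v.
Proof.
case: s x => i [] j; rewrite /cfv /gen_mx /Smx /Acoef;
rewrite !(mxE, big_ord_recl, big_ord0); ord4 i; ord4 j; rewrite /=; lia.
Qed.

Lemma gen_act x v : gen_mx x *m v = v - cfv x v *: rt x.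
Proof.
apply/matrixP => k l; rewrite (ord1 l).
case: x => i; rewrite /cfv /gen_mx /Smx /rt;
rewrite !(mxE, big_ord_recl, big_ord0); ord4 i; ord4 k; rewrite /=; lia.
Qed.

Lemma mx_ext (A B : 'M[int]_4) : (forall v : 'cV[int]_4, A *m v = B *m v) -> A = B.
Proof.
move=> H; apply/matrixP => i j.
have := congr1 (fun M : 'cV[int]_4 => M i 0) (H (col j 1%:M)).
rewrite !(mxE, big_ord_recl, big_ord0); ord4 j; rewrite /= ; lia.
Qed.

Definition x0 : 'cV[int]_4 := const_mx (-1).

Lemma cf_x0 s : 0 < cfv s x0.
Proof. case: s => i; rewrite /cfv !(mxE, big_ord_recl, big_ord0); lia. Qed.

Definition gcom (x y : gen) : bool :=
  match x, y with
  | inl i, inr j => i != j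
  | inr i, inl j => i != j
  | _, _ => false
  end.

Lemma Acoef_xx x : Acoef x x = 2.
Proof. by case: x => i /=; rewrite eqxx. Qed.

Lemma Acoef_com x y : gcom x y -> Acoef x y = 0.
Proof. by case: x y => i [] j //= /negbTE ->. Qed.

Lemma gcom_sym x y : gcom x y = gcom y x.
Proof. by case: x y => i [] j //=; rewrite eq_sym. Qed.

Lemma pairA x z : x != z -> ~~ gcom x z ->
  (Acoef x z = -2 /\ Acoef z x = -2) \/ (Acoef x z = -16 /\ Acoef z x = -1)
  \/ (Acoef x z = -1 /\ Acoef z x = -16).
Proof.
case: x z => i [] j /=.
- move=> H _; have Hij : (i == j) = false by apply/eqP => E; move: H; rewrite E eqxx.
  by rewrite Hij eq_sym Hij; left.
- by move=> _ /negbNE/eqP ->; rewrite eqxx; right; left.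
- by move=> _ /negbNE/eqP ->; rewrite eqxx; right; right.
- move=> H _; have Hij : (i == j) = false by apply/eqP => E; move: H; rewrite E eqxx.
  by rewrite Hij eq_sym Hij; left.
Qed.

Lemma gen_sq x : gen_mx x * gen_mx x = 1.
Proof.
apply: mx_ext => v; rewrite -mulmxE -mulmxA mul1mx.
rewrite (gen_act x (gen_mx x *m v)) cf_act Acoef_xx gen_act.
rewrite -addrA -opprD -scalerDl.
have -> : cfv x v + (cfv x v - 2 * cfv x v) = 0 by lia.
by rewrite scale0r subr0.
Qed.

Lemma gen_comm x y : gcom x y -> gen_mx x * gen_mx y = gen_mx y * gen_mx x.
Proof.
move=> H; have H' : gcom y x by rewrite gcom_sym.
apply: mx_ext => v; rewrite -!mulmxE -!mulmxA.
have E1 : gen_mx x *m (gen_mx y *m v) = v - cfv y v *: rt y - cfv x v *: rt x.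
  by rewrite gen_act cf_act (Acoef_com H) mul0r subr0 gen_act.
have E2 : gen_mx y *m (gen_mx x *m v) = v - cfv x v *: rt x - cfv y v *: rt y.
  by rewrite gen_act cf_act (Acoef_com H') mul0r subr0 gen_act.
by rewrite E1 E2 addrAC.
Qed.

Lemma letter_gen l : letter_mx l = gen_mx l.1.
Proof.
case: l => x [] //; rewrite /letter_mx /=.
have H' : gen_mx x *m gen_mx x = 1%:M by rewrite mulmxE gen_sq.
have [U _] := mulmx1_unit H'.
by rewrite -[invmx _]mulmx1 -H' mulmxA mulVmx // mul1mx.
Qed.

Definition evalg (u : seq gen) : 'M[int]_4 := \prod_(x <- u) gen_mx x.

Lemma evalE w : eval_word w = evalg (map fst w).
Proof. by rewrite /eval_word /evalg big_map; apply: eq_bigr => l _; exact: letter_gen. Qed.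

Lemma evalg_cat u v : evalg (u ++ v) = evalg u * evalg v.
Proof. by rewrite /evalg big_cat. Qed.

Lemma evalg_cons x u : evalg (x :: u) = gen_mx x * evalg u.
Proof. by rewrite /evalg big_cons. Qed.

Lemma evalg_nil : evalg [::] = 1.
Proof. by rewrite /evalg big_nil. Qed.

Lemma relator_eval r : relator r -> evalg (map fst r) = 1.
Proof.
case=> i [->|[->|[j [Hij ->]]]]; rewrite /= !evalg_cons evalg_nil mulr1 ?gen_sq //.
have C : gen_mx (inr j) * gen_mx (inl i) = gen_mx (inl i) * gen_mx (inr j).
  by apply: gen_comm; rewrite /= eq_sym.
by rewrite !mulrA -(mulrA (gen_mx (inl i))) C mulrA gen_sq mul1r gen_sq.
Qed.



Lemma pe_ctx a b u v : pres_eq u v -> pres_eq (a ++ u ++ b) (a ++ v ++ b).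
Proof.
elim=> {u v} [w|u v _ IH|u v w _ IH1 _ IH2|u v x c|u v r Hr].
- exact: pe_refl.
- exact: pe_sym.
- exact: pe_trans IH1 IH2.
- by move: (pe_free (a ++ u) (v ++ b) x c); rewrite -!catA /=.
- by move: (pe_rel (a ++ u) (v ++ b) Hr); rewrite -!catA /=.
Qed.

Lemma pe_odd u v : pres_eq u v -> odd (size u) = odd (size v).
Proof.
elim=> {u v} [w|u v _ IH|u v w _ IH1 _ IH2|u v x c|u v r [i [->|[->|[j [_ ->]]]]]] //.
- by rewrite IH1.
- by rewrite !size_cat /= !addnS /= negbK.
- by rewrite !size_cat /= !addnS /= negbK.
- by rewrite !size_cat /= !addnS /= negbK.
- by rewrite !size_cat /= !addnS /= !negbK.
Qed.

Lemma pe_sound u v : pres_eq u v -> eval_word u = eval_word v.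
Proof.
rewrite !evalE; elim=> {u v} [w|u v _ IH|u v w _ IH1 _ IH2|u v x c|u v r Hr] //.
- by rewrite IH1.
- by rewrite !map_cat /= !evalg_cat !evalg_cons (mulrA (gen_mx x)) gen_sq mul1r.
- by rewrite !map_cat !evalg_cat (relator_eval Hr) mul1r.
Qed.

Definition emb (u : seq gen) : word := map (fun g => (g, false)) u.
Definition peq u v := pres_eq (emb u) (emb v).

Lemma fst_emb u : map fst (emb u) = u.
Proof. by elim: u => //= x u ->. Qed.

Lemma peq_sound u v : peq u v -> evalg u = evalg v.
Proof. by move/pe_sound; rewrite !evalE !fst_emb. Qed.

Lemma peq_refl u : peq u u. Proof. exact: pe_refl. Qed.
Lemma peq_sym u v : peq u v -> peq v u. Proof. exact: pe_sym. Qed.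
Lemma peq_trans u v w : peq u v -> peq v w -> peq u w. Proof. exact: pe_trans. Qed.

Lemma peq_ctx a b u v : peq u v -> peq (a ++ u ++ b) (a ++ v ++ b).
Proof. by rewrite /peq /emb !map_cat; apply: pe_ctx. Qed.

Lemma peq_cons x u v : peq u v -> peq (x :: u) (x :: v).
Proof. by move/(peq_ctx [:: x] [::]); rewrite /= !cats0. Qed.

Lemma peq_cat u u' v v' : peq u u' -> peq v v' -> peq (u ++ v) (u' ++ v').
Proof.
move=> H1 H2; apply: peq_trans (_ : peq (u' ++ v) _).
  by move: (peq_ctx [::] v H1); rewrite /=.
by move: (peq_ctx u' [::] H2); rewrite !cats0.
Qed.

Lemma rel_sq x : relator [:: (x, false); (x, false)].
Proof. by case: x => i; exists i; [left|right; left]. Qed.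

Lemma peq_cancel a b x : peq (a ++ x :: x :: b) (a ++ b).
Proof.
apply: peq_sym; rewrite /peq /emb !map_cat /=.
exact: (@pe_rel (map (fun g => (g, false)) a) (map (fun g => (g, false)) b) _ (rel_sq x)).
Qed.

Lemma peq_comm0 i j : i != j -> peq [:: inl i; inr j] [:: inr j; inl i].
Proof.
move=> Hij.
have R : relator [:: (inl i, false); (inr j, false); (inl i, false); (inr j, false)].
  by exists i; right; right; exists j.
have H1 : peq [:: inr j; inl i] [:: inr j; inl i; inl i; inr j; inl i; inr j].
  exact: (@pe_rel [:: (inr j, false); (inl i, false)] [::] _ R).
apply: peq_sym; apply: peq_trans H1 _.
apply: peq_trans (_ : peq [:: inr j; inr j; inl i; inr j] _).
  exact: (peq_cancel [:: inr j] [:: inr j; inl i; inr j] (inl i)).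
exact: (peq_cancel [::] [:: inl i; inr j] (inr j)).
Qed.

Lemma peq_comm a b x y : gcom x y -> peq (a ++ x :: y :: b) (a ++ y :: x :: b).
Proof.
move=> H; apply: (peq_ctx a b (u := [:: x; y]) (v := [:: y; x])).
case: x y H => i [] j //= H; first exact: peq_comm0.
by apply: peq_sym; apply: peq_comm0; rewrite eq_sym.
Qed.

Lemma peq_inv p : peq (rev p ++ p) [::].
Proof.
elim: p => [|x p IH]; first exact: peq_refl.
rewrite rev_cons -cats1 -catA /=.
exact: peq_trans (peq_cancel _ _ _) IH.
Qed.

Lemma pe_pos w : pres_eq w (emb (map fst w)).
Proof.
elim: w => [|[x c] w IH]; first exact: pe_refl.
apply: pe_trans (_ : pres_eq ((x, c) :: emb (map fst w)) _).
  by move: (pe_ctx [:: (x, c)] [::] IH); rewrite /= !cats0.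
have H : pres_eq [:: (x, c)] [:: (x, false)].
  case: c; last exact: pe_refl.
  apply: pe_trans (_ : pres_eq [:: (x, true); (x, false); (x, false)] _).
    exact: (@pe_rel [:: (x, true)] [::] _ (rel_sq x)).
  apply: pe_sym; exact: (@pe_free [::] [:: (x, false)] x true).
by move: (pe_ctx [::] (emb (map fst w)) H).
Qed.

Lemma cmin (P : nat -> Prop) n0 : P n0 -> exists m, P m /\ forall k, P k -> (m <= k)%N.
Proof.
move=> H.
pose Pb := fun n => if excluded_middle_informative (P n) then true else false.
have PbP n : Pb n <-> P n by rewrite /Pb; case: excluded_middle_informative.
have ex : exists n, Pb n by exists n0; apply/PbP.
case: (ex_minnP ex) => m /PbP Pm Hm; exists m; split => // k /PbP; exact: Hm.
Qed.

Definition Lb (w : seq gen) : pred nat := fun n =>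
  if excluded_middle_informative (exists w', size w' = n /\ peq w w') then true else false.
Lemma LbP w n : reflect (exists w', size w' = n /\ peq w w') (Lb w n).
Proof. by rewrite /Lb; case: excluded_middle_informative => H; constructor. Qed.
Lemma Lb_ex w : exists n, Lb w n.
Proof. by exists (size w); apply/LbP; exists w; split => //; apply: peq_refl. Qed.
Definition wlen w := ex_minn (Lb_ex w).

Lemma wlen_spec w : exists w', size w' = wlen w /\ peq w w'.
Proof. by rewrite /wlen; case: ex_minnP => m /LbP. Qed.

Lemma wlen_min w w' : peq w w' -> (wlen w <= size w')%N.
Proof. by rewrite /wlen; case: ex_minnP => m _ H Hw; apply: H; apply/LbP; exists w'. Qed.

Lemma wlen_size w : (wlen w <= size w)%N.
Proof. exact/wlen_min/peq_refl. Qed.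

Lemma wlen_peq w w' : peq w w' -> wlen w = wlen w'.
Proof.
move=> H; apply/eqP; rewrite eqn_leq; apply/andP; split.
  case: (wlen_spec w') => w'' [<- H']; apply: wlen_min; exact: peq_trans H H'.
case: (wlen_spec w) => w'' [<- H']; apply: wlen_min; exact: peq_trans (peq_sym H) H'.
Qed.

Lemma wlen_cat u v : (wlen (u ++ v) <= wlen u + wlen v)%N.
Proof.
case: (wlen_spec u) => u' [<- Hu]; case: (wlen_spec v) => v' [<- Hv].
rewrite -size_cat; apply: wlen_min; exact: peq_cat.
Qed.

Lemma wlen_odd w : odd (wlen w) = odd (size w).
Proof.
case: (wlen_spec w) => w' [<- H]; move/pe_odd: H; rewrite /emb !size_map => ->. done.
Qed.

Lemma wlen_cons x w : wlen (x :: w) = (wlen w).+1 \/ (wlen (x :: w)).+1 = wlen w.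
Proof.
have h1 : (wlen (x :: w) <= (wlen w).+1)%N.
  apply: leq_trans (wlen_cat [:: x] w) _.
  by have := wlen_size [:: x]; rewrite /=; lia.
have h2 : (wlen w <= (wlen (x :: w)).+1)%N.
  rewrite (wlen_peq (peq_sym (peq_cancel [::] w x))).
  apply: leq_trans (wlen_cat [:: x] (x :: w)) _.
  by have := wlen_size [:: x]; rewrite /=; lia.
have h3 : odd (wlen (x :: w)) = ~~ odd (wlen w) by rewrite !wlen_odd.
have h4 : wlen (x :: w) != wlen w.
  by apply/eqP => E; move: h3; rewrite E; case: odd.
lia.
Qed.



Fixpoint altw (x z : gen) (k : nat) : seq gen :=
  if k is k'.+1 then x :: altw z x k' else [::].

Lemma evalg_consv x u (v : 'cV[int]_4) : evalg (x :: u) *m v = gen_mx x *m (evalg u *m v).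
Proof. by rewrite evalg_cons -mulmxE mulmxA. Qed.

Lemma evalg_nilv (v : 'cV[int]_4) : evalg [::] *m v = v.
Proof. by rewrite evalg_nil mul1mx. Qed.

Lemma evalg_catv u w (v : 'cV[int]_4) : evalg (u ++ w) *m v = evalg u *m (evalg w *m v).
Proof. by rewrite evalg_cat -mulmxE mulmxA. Qed.

Lemma alt_step x z v : x != z -> ~~ gcom x z -> 0 <= cfv x v ->
  0 <= 2 * cfv z v - Acoef z x * cfv x v ->
  [/\ cfv x (gen_mx x *m v) <= 0, 0 <= cfv z (gen_mx x *m v)
    & 0 <= 2 * cfv x (gen_mx x *m v) - Acoef x z * cfv z (gen_mx x *m v)].
Proof.
move=> H1 H2; rewrite !cf_act Acoef_xx.
by case: (pairA H1 H2) => [[-> ->]|[[-> ->]|[-> ->]]] => *; split; lia.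
Qed.

Lemma alt_lem k : forall x z v, x != z -> ~~ gcom x z -> 0 <= cfv x v -> 0 <= cfv z v ->
  (0 < k)%N ->
  [/\ cfv x (evalg (altw x z k) *m v) <= 0, 0 <= cfv z (evalg (altw x z k) *m v)
    & 0 <= 2 * cfv x (evalg (altw x z k) *m v) - Acoef x z * cfv z (evalg (altw x z k) *m v)].
Proof.
elim: k => [//|k IH] x z v H1 H2 Hx Hz _; rewrite /= evalg_consv.
case: k IH => [|k] IH.
  rewrite evalg_nilv; apply: alt_step => //.
  by case: (pairA H1 H2) => [[_ ->]|[[_ ->]|[_ ->]]]; lia.
have H1' : z != x by rewrite eq_sym.
have H2' : ~~ gcom z x by rewrite gcom_sym.
by case: (IH z x v H1' H2' Hz Hx isT) => *; apply: alt_step.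
Qed.



Lemma red_tail a z : wlen (a :: z) = size (a :: z) -> wlen z = size z.
Proof.
move=> H; have h1 := wlen_size z; have h2 := wlen_cat [:: a] z.
have h3 := wlen_size [:: a]; move: H h2 h3 => /= H; lia.
Qed.

Lemma red_neq a b z : wlen (a :: b :: z) = size (a :: b :: z) -> a != b.
Proof.
move=> H; apply/eqP => E; subst b.
have := wlen_peq (peq_cancel [::] z a); rewrite /= H.
have := wlen_size z; rewrite /=; lia.
Qed.

Lemma red_com a b z : gcom a b -> wlen (a :: b :: a :: z) = size (a :: b :: a :: z) -> False.
Proof.
move=> C H.
have P1 := peq_comm [::] (a :: z) C.
have P2 := peq_cancel [:: b] z a.
have := wlen_peq (peq_trans P1 P2); rewrite /= H.
have := wlen_size (b :: z); rewrite /=; lia.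
Qed.

Lemma altP u a b : all (fun g => (g == a) || (g == b)) u ->
  wlen (a :: u) = size (a :: u) -> u = altw b a (size u).
Proof.
elim: u a b => [//|c u IH] a b /= /andP [Hc Hu] R.
have nac := red_neq R.
case/orP: Hc => /eqP Ec; first by rewrite Ec eqxx in nac.
subst c; congr (_ :: _); apply: IH.
  by move: Hu; apply: sub_all => g /=; rewrite orbC.
exact: red_tail R.
Qed.

Lemma key n : forall w s, wlen w = n -> (wlen w < wlen (s :: w))%N ->
  0 <= cfv s (evalg w *m x0).
Proof.
elim/ltn_ind: n => n IH w s Hn Hs.
case: (wlen_spec w) => w0 [Hw0 Pw0].
case: w0 Hw0 Pw0 => [|s' w1] Hw0 Pw0.
  by rewrite (peq_sound Pw0) evalg_nilv; apply: ltW; exact: cf_x0.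
move: Hw0 => /= Hw0.
have Lw : wlen w = wlen (s' :: w1) := wlen_peq Pw0.
have L1 : wlen w1 = size w1.
  have := wlen_size w1; have := wlen_cons s' w1; lia.
have Hss : s != s'.
  apply/eqP => E; subst s'.
  have := wlen_peq (peq_cons s Pw0).
  rewrite (wlen_peq (peq_cancel [::] w1 s)) /= => E.
  lia.
pose P m := exists u v : seq gen, [/\ all (fun g => (g == s) || (g == s')) u, peq w (u ++ v),
  wlen w = (size u + wlen v)%N & wlen v = m].
have P0 : P (wlen w1).
  exists [:: s'], w1; split => //=; first by rewrite eqxx orbT.
  lia.
have [m [Pm Mm]] := cmin P0.
case: Pm => u [v [Au Pu Lu Lv]].
have mlt : (m < n)%N by have := Mm _ P0; lia.
have Hu : (0 < size u)%N by lia.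
have Cgen : forall t : gen, (t == s) || (t == s') -> (wlen v < wlen (t :: v))%N.
  move=> t Ht; case: (wlen_cons t v) => E; first lia.
  have : P (wlen (t :: v)).
    exists (u ++ [:: t]), (t :: v); split.
    - by rewrite all_cat Au /= Ht.
    - apply: peq_trans Pu _; rewrite -catA /=; apply: peq_sym; exact: peq_cancel.
    - by rewrite size_cat /=; lia.
    - by [].
  move/Mm; lia.
have Cs : (wlen v < wlen (s :: v))%N by apply: Cgen; rewrite eqxx.
have Cs' : (wlen v < wlen (s' :: v))%N by apply: Cgen; rewrite eqxx orbT.
have Ys := IH m mlt v s Lv Cs.
have Ys' := IH m mlt v s' Lv Cs'.
have Lsw : wlen (s :: w) = (wlen w).+1.
  by case: (wlen_cons s w) => E //; lia.
have Lsu : wlen (s :: u) = size (s :: u).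
  have h1 := wlen_peq (peq_cons s Pu).
  have h2 := wlen_cat (s :: u) v.
  have h3 := wlen_size (s :: u).
  move: h1 h2 h3 => /= h1 h2 h3; lia.
have Eu := altP Au Lsu.
rewrite (peq_sound Pu) evalg_catv.
case: (boolP (gcom s s')) => C.
  move: Eu Lsu; case: (size u) Hu => [//|[|k]] _ -> Lsu.
    by rewrite /= evalg_consv evalg_nilv cf_act (Acoef_com C) mul0r subr0.
  by exfalso; apply: (red_com C Lsu).
rewrite Eu.
have H1 : s' != s by rewrite eq_sym.
have H2 : ~~ gcom s' s by rewrite gcom_sym.
by case: (@alt_lem (size u) s' s (evalg v *m x0) H1 H2 Ys' Ys Hu).
Qed.

Lemma main_pos w : evalg w = 1 -> peq w [::].
Proof.
move=> Ew.
case E: (wlen w) => [|n].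
  case: (wlen_spec w) => w' [Hs Pw]; rewrite E in Hs.
  by case: w' Hs Pw.
exfalso.
case: (wlen_spec w) => w0 [Hw0 Pw0].
case: w0 Hw0 Pw0 => [|s w1] Hw0 Pw0; first by rewrite E in Hw0.
move: Hw0 => /= Hw0.
have Lw := wlen_peq Pw0.
have L1 : wlen w1 = n.
  have := wlen_size w1; have := wlen_cons s w1; lia.
have K : (wlen w1 < wlen (s :: w1))%N -> 0 <= cfv s (evalg w1 *m x0) := key L1.
have Y : x0 = gen_mx s *m (evalg w1 *m x0).
  by rewrite -evalg_consv -(peq_sound Pw0) Ew mul1mx.
have := cf_x0 s; rewrite Y cf_act Acoef_xx.
have : (wlen w1 < wlen (s :: w1))%N by lia.
move/K; lia.
Qed.

Lemma pos_complete p1 p2 : evalg p1 = evalg p2 -> peq p1 p2.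
Proof.
move=> H.
have H1 : peq (rev p1 ++ p2) [::].
  apply: main_pos; rewrite evalg_cat -H -evalg_cat.
  by rewrite (peq_sound (peq_inv p1)) evalg_nil.
have H2 := peq_inv (rev p1); rewrite revK in H2.
apply: peq_sym; apply: peq_trans (_ : peq ((p1 ++ rev p1) ++ p2) _).
  by move: (peq_ctx [::] p2 H2); rewrite /=; apply: peq_sym.
rewrite -catA; move: (peq_ctx p1 [::] H1); rewrite !cats0 //.
Qed.

Theorem theorem6p1 :
  forall w1 w2 : word, eval_word w1 = eval_word w2 <-> pres_eq w1 w2.
Proof.
move=> w1 w2; split; last exact: pe_sound.
rewrite !evalE => /pos_complete H.
apply: pe_trans (pe_pos w1) _; apply: pe_trans H _; apply: pe_sym; exact: pe_pos.
Qed.
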